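(* In the setting below, suppose there exists $t_0\in(0,1]$ such that both $Z_1(t_0)$ and $Z_2(t_0)$ are tangent to the coordinate axes. Then both $Z_1(t)$ and $Z_2(t)$ stay on the corresponding axes for all $t\in(0,1]$.
   Context: Planar three-body problem with masses $m_1=m_2=m_3=1$, $\chi=\{q=(q_1,q_2,q_3)\in(\mathbb{R}^2)^3: q_1+q_2+q_3=0\}$, action $\mathcal{A}(q)=\int_0^1\big(\tfrac12\sum|\dot q_i|^2+\sum_{i<j}\frac{1}{|q_i-q_j|}\big)dt$. Let $Q_{S_4}=\{q: q_1=q_2=(-a_2,0),\ q_3=(2a_2,0),\ a_2\ge0\}$ and $Q_{E_1}=\{q: q_1=(0,-2b_1),\ q_2=(-b_2,b_1),\ q_3=(b_2,b_1),\ b_1,b_2\in\mathbb{R}\}$. Let $q$ minimize $\mathcal{A}$ over $\{q\in H^1([0,1],\chi): q(0)\in Q_{S_4},\ q(1)\in Q_{E_1}\}$; it is collision-free for $t\in(0,1]$ and there satisfies Newton's equations $\ddot q_i=\sum_{j\ne i}\frac{q_j-q_i}{|q_j-q_i|^3}$. Jacobi coordinates: $Z_1=q_1-q_2$, $Z_2=q_3-\frac{q_1+q_2}{2}$. A vector function $Z$ is tangent to the $x$-axis (resp. $y$-axis) at $t_0$ if $Z_y(t_0)=\dot Z_y(t_0)=0$ (resp. $Z_x(t_0)=\dot Z_x(t_0)=0$); ''the corresponding axes'' means, for each $i$, the axis to which $Z_i$ is tangent at $t_0$. *)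

(* Defs.v *)
From HB Require Import structures.
From mathcomp Require Import all_boot all_order all_algebra.
From mathcomp Require Import all_classical all_reals all_analysis.
Set Implicit Arguments. Unset Strict Implicit. Unset Printing Implicit Defensive.
Import Order.TTheory GRing.Theory Num.Theory.
Import numFieldNormedType.Exports.
Local Open Scope classical_set_scope.
Local Open Scope ring_scope.

Section ThreeBody.
Variable R : realType.

Definition pt := (R * R)%type.

Definition bd1 : 'I_3 := @Ordinal 3 0 isT.
Definition bd2 : 'I_3 := @Ordinal 3 1 isT.
Definition bd3 : 'I_3 := @Ordinal 3 2 isT.

Definition edist (a b : pt) : R :=
  Num.sqrt ((a.1 - b.1) ^+ 2 + (a.2 - b.2) ^+ 2).

Definition in_chi (c : 'I_3 -> pt) : Prop :=
  \sum_(i < 3) (c i).1 = 0 /\ \sum_(i < 3) (c i).2 = 0.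

Definition in_QS4 (c : 'I_3 -> pt) : Prop :=
  exists a2 : R, 0 <= a2 /\
    c bd1 = (- a2, 0) /\ c bd2 = (- a2, 0) /\ c bd3 = (2 * a2, 0).

Definition in_QE1 (c : 'I_3 -> pt) : Prop :=
  exists b1 b2 : R,
    c bd1 = (0, - (2 * b1)) /\ c bd2 = (- b2, b1) /\ c bd3 = (b2, b1).

(* f is in H^1([0,1]) with weak derivative g: f is absolutely continuous
   on [0,1] with derivative g in L^2([0,1]) *)
Definition H1fun (f g : R -> R) : Prop :=
  measurable_fun (`[0, 1]%classic : set R) g /\
  (@lebesgue_measure R).-integrable (`[0, 1]%classic : set R) (EFin \o g) /\
  (@lebesgue_measure R).-integrable (`[0, 1]%classic : set R)
      (EFin \o (fun t => g t ^+ 2)) /\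
  forall t : R, 0 <= t <= 1 ->
    f t = f 0 + fine (\int[@lebesgue_measure R]_(s in (`[0, t]%classic : set R)) (g s)%:E).

Definition H1path (q w : 'I_3 -> R -> pt) : Prop :=
  forall i : 'I_3, H1fun (fun t => (q i t).1) (fun t => (w i t).1) /\
                   H1fun (fun t => (q i t).2) (fun t => (w i t).2).

Definition pot (a b : pt) : \bar R :=
  if edist a b == 0 then +oo%E else ((edist a b)^-1)%:E.

Definition lagrangian (q w : 'I_3 -> R -> pt) (t : R) : \bar R :=
  ((2^-1 * \sum_(i < 3) ((w i t).1 ^+ 2 + (w i t).2 ^+ 2))%:E +
   \sum_(i < 3) \sum_(j < 3 | (i < j)%N) pot (q i t) (q j t))%E.

Definition action (q w : 'I_3 -> R -> pt) : \bar R :=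
  \int[@lebesgue_measure R]_(t in (`[0, 1]%classic : set R)) lagrangian q w t.

Definition admissible (q w : 'I_3 -> R -> pt) : Prop :=
  H1path q w /\ (forall t : R, 0 <= t <= 1 -> in_chi (fun i => q i t)) /\
  in_QS4 (fun i => q i 0) /\ in_QE1 (fun i => q i 1).

Definition is_minimizer (q : 'I_3 -> R -> pt) : Prop :=
  exists w, admissible q w /\
    forall q' w', admissible q' w' -> (action q w <= action q' w')%E.

Definition collision_free (q : 'I_3 -> R -> pt) : Prop :=
  forall t : R, 0 < t <= 1 -> forall i j : 'I_3, i != j -> q i t != q j t.

(* derivative of f at t relative to the time interval [0,1]
   (one-sided at the endpoint t = 1) *)
Definition derivW (f : R -> R) (t l : R) : Prop :=
  (fun h : R => h^-1 * (f (t + h) - f t)) @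
     within (fun h : R => h != 0 /\ 0 <= t + h <= 1) (nbhs (0 : R)) --> l.

Definition force (c : 'I_3 -> pt) (i : 'I_3) : pt :=
  (\sum_(j < 3 | j != i) ((c j).1 - (c i).1) / edist (c j) (c i) ^+ 3,
   \sum_(j < 3 | j != i) ((c j).2 - (c i).2) / edist (c j) (c i) ^+ 3).

Definition newton (q : 'I_3 -> R -> pt) : Prop :=
  exists v : 'I_3 -> R -> pt, forall t : R, 0 < t <= 1 -> forall i : 'I_3,
    derivW (fun s => (q i s).1) t (v i t).1 /\
    derivW (fun s => (q i s).2) t (v i t).2 /\
    derivW (fun s => (v i s).1) t (force (fun j => q j t) i).1 /\
    derivW (fun s => (v i s).2) t (force (fun j => q j t) i).2.

Definition Z1 (q : 'I_3 -> R -> pt) (t : R) : pt :=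
  ((q bd1 t).1 - (q bd2 t).1, (q bd1 t).2 - (q bd2 t).2).
Definition Z2 (q : 'I_3 -> R -> pt) (t : R) : pt :=
  ((q bd3 t).1 - ((q bd1 t).1 + (q bd2 t).1) / 2,
   (q bd3 t).2 - ((q bd1 t).2 + (q bd2 t).2) / 2).

Definition tangent_x (Z : R -> pt) (t0 : R) : Prop :=
  (Z t0).2 = 0 /\ derivW (fun t => (Z t).2) t0 0.
Definition tangent_y (Z : R -> pt) (t0 : R) : Prop :=
  (Z t0).1 = 0 /\ derivW (fun t => (Z t).1) t0 0.

Definition stays_on_axes (Z : R -> pt) (t0 : R) : Prop :=
  (tangent_x Z t0 -> forall t : R, 0 < t <= 1 -> (Z t).2 = 0) /\
  (tangent_y Z t0 -> forall t : R, 0 < t <= 1 -> (Z t).1 = 0).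

End ThreeBody.

(* Main.v *)
Require Import Defs.
From HB Require Import structures.
From mathcomp Require Import all_boot all_order all_algebra.
From mathcomp Require Import all_classical all_reals all_analysis.
From mathcomp Require Import ring lra.
Set Implicit Arguments. Unset Strict Implicit. Unset Printing Implicit Defensive.
Import Order.TTheory GRing.Theory Num.Theory.
Import numFieldNormedType.Exports.
Local Open Scope classical_set_scope.
Local Open Scope ring_scope.

Section Main.
Variable R : realType.


Lemma sq_sum3 (a b c : R) : (a + b + c)^+2 <= 3 * (a^+2 + b^+2 + c^+2).
Proof.
have e : 3 * (a^+2 + b^+2 + c^+2) - (a + b + c)^+2 = (a-b)^+2 + (b-c)^+2 + (a-c)^+2 by ring.
rewrite -subr_ge0 e; have := sqr_ge0 (a-b); have := sqr_ge0 (b-c); have := sqr_ge0 (a-c); lra.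
Qed.

Lemma Kbound (p s G : R) : 0 < p -> 0 < s -> p^+2 <= G -> s^+2 <= G ->
  (p^+3 + p^+2 * s + p * s^+2)^+2 <= 9 * G^+3.
Proof.
move=> p0 s0 pG sG.
have G0 : 0 <= G by apply: le_trans pG; nra.
have h1 : (p^+3)^+2 <= G^+3.
  have -> : (p^+3)^+2 = (p^+2)^+3 by ring.
  by apply: (@lerXn2r _ 3); rewrite ?nnegrE /=; nra.
have h2 : (p^+2 * s)^+2 <= G^+3.
  have -> : (p^+2 * s)^+2 = (p^+2)^+2 * s^+2 by ring.
  have -> : G^+3 = G^+2 * G by ring.
  apply: ler_pM; rewrite ?sqr_ge0 //; first by nra.
  all: try (by apply: (@lerXn2r _ 2); rewrite ?nnegrE /=; nra).
have h3 : (p * s^+2)^+2 <= G^+3.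
  have -> : (p * s^+2)^+2 = p^+2 * (s^+2)^+2 by ring.
  have -> : G^+3 = G * G^+2 by ring.
  apply: ler_pM; rewrite ?sqr_ge0 //; try nra.
  all: try (by apply: (@lerXn2r _ 2); rewrite ?nnegrE /=; nra).
apply: le_trans (sq_sum3 _ _ _) _; lra.
Qed.

Lemma sqrt_diff_le (x1 x2 y1 y2 : R) :
  (Num.sqrt (y1^+2+y2^+2) - Num.sqrt (x1^+2+x2^+2))^+2 <= (x1-y1)^+2 + (x2-y2)^+2.
Proof.
set r := Num.sqrt (x1^+2+x2^+2); set s := Num.sqrt (y1^+2+y2^+2).
have r0 : 0 <= r by apply: sqrtr_ge0.
have s0 : 0 <= s by apply: sqrtr_ge0.
have r2 : r^+2 = x1^+2+x2^+2 by rewrite sqr_sqrtr // ?addr_ge0 ?sqr_ge0.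
have s2 : s^+2 = y1^+2+y2^+2 by rewrite sqr_sqrtr // ?addr_ge0 ?sqr_ge0.
have cs : (x1*y1 + x2*y2)^+2 <= (r*s)^+2.
  rewrite exprMn r2 s2 -subr_ge0.
  have -> : (x1 ^+ 2 + x2 ^+ 2) * (y1 ^+ 2 + y2 ^+ 2) - (x1 * y1 + x2 * y2) ^+ 2
     = (x1*y2 - x2*y1)^+2 by ring.
  exact: sqr_ge0.
have rs0 : 0 <= r * s by apply: mulr_ge0.
have dot : x1*y1 + x2*y2 <= r * s.
  case: (lerP 0 (x1*y1 + x2*y2)) => h; last by lra.
  by rewrite -(ler_pXn2r (n:=2)) ?nnegrE.
have -> : (s - r)^+2 = s^+2 + r^+2 - 2 * (r * s) by ring.
rewrite r2 s2.
have -> : (x1 - y1) ^+ 2 + (x2 - y2) ^+ 2 = x1^+2 + x2^+2 + (y1^+2 + y2^+2) - 2 * (x1*y1+x2*y2) by ring.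
lra.
Qed.

Lemma pairLip (x1 x2 y1 y2 G : R) :
  0 < x1^+2+x2^+2 -> 0 < y1^+2+y2^+2 ->
  (x1^+2+x2^+2)^-1 <= G -> (y1^+2+y2^+2)^-1 <= G ->
  (x1 / Num.sqrt (x1^+2+x2^+2) ^+3 - y1 / Num.sqrt (y1^+2+y2^+2) ^+3)^+2
  + (x2 / Num.sqrt (x1^+2+x2^+2) ^+3 - y2 / Num.sqrt (y1^+2+y2^+2) ^+3)^+2
  <= 32 * G^+3 * ((x1-y1)^+2 + (x2-y2)^+2).
Proof.
move=> X0 Y0 XG YG.
have D := sqrt_diff_le x1 x2 y1 y2.
move: D.
set X := x1^+2+x2^+2 in X0 XG *; set Y := y1^+2+y2^+2 in Y0 YG *.
set d := (x1-y1)^+2 + (x2-y2)^+2 => D.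
set r := Num.sqrt X; set s := Num.sqrt Y.
have r0 : 0 < r by rewrite sqrtr_gt0.
have s0 : 0 < s by rewrite sqrtr_gt0.
have r2 : r^+2 = X by rewrite sqr_sqrtr // ltW.
have s2 : s^+2 = Y by rewrite sqr_sqrtr // ltW.
set p := r^-1; set q := s^-1.
have p0 : 0 < p by rewrite invr_gt0.
have q0 : 0 < q by rewrite invr_gt0.
have pG : p^+2 <= G by rewrite /p exprVn r2.
have qG : q^+2 <= G by rewrite /q exprVn s2.
have G0 : 0 <= G by apply: le_trans pG; nra.
have K := Kbound p0 q0 pG qG.
set K0 := p ^+ 3 + p ^+ 2 * q + p * q ^+ 2 in K.
set A := p^+3; set B := q^+3.
have eA : r^+3 = A^-1 by rewrite /A /p exprVn invrK.
have eB : s^+3 = B^-1 by rewrite /B /q exprVn invrK.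
rewrite eA eB !invrK.
have iden : (A - B) * s = (s - r) * K0.
  rewrite /A /B /K0 /p /q; field.
  by rewrite !gt_eqF.
have e1 : forall a b : R, a * A - b * B = (a - b) * A + b * (A - B).
  by move=> a b; ring.
rewrite !e1.
have h2 : forall u w : R, (u + w)^+2 <= 2 * u^+2 + 2 * w^+2.
  move=> u w; have := sqr_ge0 (u - w); nra.
have A2 : A^+2 <= G^+3.
  rewrite /A -exprM mulnC exprM; apply: (@lerXn2r _ 3); rewrite ?nnegrE //=; nra.
have B2 : (A - B)^+2 * Y <= 9 * G^+3 * d.
  rewrite -s2 -exprMn iden exprMn.
  have : (s - r)^+2 * K0^+2 <= d * (9 * G^+3).
    apply: ler_pM; rewrite ?sqr_ge0 //.
  lra.
have := h2 ((x1 - y1) * A) (y1 * (A - B)).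
have := h2 ((x2 - y2) * A) (y2 * (A - B)).
have eq1 : 2 * ((x1 - y1) * A) ^+ 2 + 2 * ((x2 - y2) * A) ^+ 2 = 2 * A^+2 * d by rewrite /d; ring.
have eq2 : 2 * (y1 * (A - B)) ^+ 2 + 2 * (y2 * (A - B)) ^+ 2 = 2 * ((A-B)^+2 * Y) by rewrite /Y; ring.
have d0 : 0 <= d by rewrite /d addr_ge0 // sqr_ge0.
have : A^+2 * d <= G^+3 * d by apply: ler_wpM2r.
nra.
Qed.

Definition fx (c : 'I_3 -> pt R) (i j : 'I_3) : R :=
  ((c j).1 - (c i).1) / Defs.edist (c j) (c i) ^+ 3.
Definition fy (c : 'I_3 -> pt R) (i j : 'I_3) : R :=
  ((c j).2 - (c i).2) / Defs.edist (c j) (c i) ^+ 3.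

Lemma wo2 : widen_ord (leqnSn 2) ord_max = bd2. Proof. exact: val_inj. Qed.
Lemma om3 : (ord_max : 'I_3) = bd3. Proof. exact: val_inj. Qed.

Lemma wo1 : widen_ord (leqnSn 2) (widen_ord (leqnSn 1) (ord_max : 'I_1)) = bd1.
Proof. exact: val_inj. Qed.

Ltac fexp := rewrite /force; rewrite big_mkcond /= !big_ord_recr big_ord0 /=;
  rewrite big_mkcond /= !big_ord_recr big_ord0 /= ?wo1 ?wo2 ?om3 /fx /fy;
  congr pair; ring.

Lemma force1 c : force c bd1 = (fx c bd1 bd2 + fx c bd1 bd3, fy c bd1 bd2 + fy c bd1 bd3).
Proof. fexp. Qed.
Lemma force2 c : force c bd2 = (fx c bd2 bd1 + fx c bd2 bd3, fy c bd2 bd1 + fy c bd2 bd3).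
Proof. fexp. Qed.
Lemma force3 c : force c bd3 = (fx c bd3 bd1 + fx c bd3 bd2, fy c bd3 bd1 + fy c bd3 bd2).
Proof. fexp. Qed.

Lemma sum3 (F : 'I_3 -> R) : \sum_(i < 3) F i = F bd1 + F bd2 + F bd3.
Proof. by rewrite !big_ord_recr big_ord0 /= ?wo1 ?wo2 ?om3 add0r. Qed.

Definition sqd (a b : pt R) : R := (a.1 - b.1)^+2 + (a.2 - b.2)^+2.
Definition good (c : 'I_3 -> pt R) (G : R) :=
  forall i j : 'I_3, i != j -> 0 < sqd (c j) (c i) /\ (sqd (c j) (c i))^-1 <= G.

Lemma pairLip' c c' G i j : i != j -> good c G -> good c' G ->
  (fx c i j - fx c' i j)^+2 + (fy c i j - fy c' i j)^+2 <=
  32 * G^+3 * ((((c j).1 - (c i).1) - ((c' j).1 - (c' i).1))^+2 +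
               (((c j).2 - (c i).2) - ((c' j).2 - (c' i).2))^+2).
Proof.
move=> ij g g'; have [h1 h2] := g i j ij; have [h1' h2'] := g' i j ij.
exact: pairLip h1 h1' h2 h2'.
Qed.

Definition FD (c c' : 'I_3 -> pt R) := \sum_(i < 3) (((force c i).1 - (force c' i).1)^+2 + ((force c i).2 - (force c' i).2)^+2).
Definition PD (c c' : 'I_3 -> pt R) := \sum_(i < 3) (((c i).1 - (c' i).1)^+2 + ((c i).2 - (c' i).2)^+2).

Lemma h2ineq (u w : R) : (u + w)^+2 <= 2 * u^+2 + 2 * w^+2.
Proof. have := sqr_ge0 (u - w); nra. Qed.
Lemma h2ineq' (u w : R) : (u - w)^+2 <= 2 * u^+2 + 2 * w^+2.
Proof. have := sqr_ge0 (u + w); nra. Qed.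

Lemma forceLip c c' G : good c G -> good c' G -> 0 <= G ->
  FD c c' <= 512 * G^+3 * PD c c'.
Proof.
move=> g g' G0.
have n12 : bd1 != bd2 by []. have n13 : bd1 != bd3 by []. have n23 : bd2 != bd3 by [].
have n21 : bd2 != bd1 by []. have n31 : bd3 != bd1 by []. have n32 : bd3 != bd2 by [].
have P12 := pairLip' n12 g g'. have P13 := pairLip' n13 g g'. have P23 := pairLip' n23 g g'.
have P21 := pairLip' n21 g g'. have P31 := pairLip' n31 g g'. have P32 := pairLip' n32 g g'.
rewrite /FD /PD !sum3 !force1 !force2 !force3 /=.
set gg := 32 * G^+3 in P12 P13 P23 P21 P31 P32 *.
have gg0 : 0 <= gg by rewrite /gg mulr_ge0 // exprn_ge0.
have L : forall (a b a' b' x y x' y' : R),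
   (a + b - (a' + b'))^+2 + (x + y - (x' + y'))^+2 <=
   2 * ((a - a')^+2 + (x - x')^+2) + 2 * ((b - b')^+2 + (y - y')^+2).
  move=> a b a' b' x y x' y'.
  have := h2ineq (a - a') (b - b'); have := h2ineq (x - x') (y - y').
  have -> : a + b - (a' + b') = (a - a') + (b - b') by ring.
  have -> : x + y - (x' + y') = (x - x') + (y - y') by ring.
  lra.
have E : forall u1 u2 w1 w2 u1' u2' w1' w2' : R,
  (u1 - w1 - (u1' - w1'))^+2 + (u2 - w2 - (u2' - w2'))^+2 <=
   2 * ((u1 - u1')^+2 + (u2 - u2')^+2) + 2 * ((w1 - w1')^+2 + (w2 - w2')^+2).
  move=> u1 u2 w1 w2 u1' u2' w1' w2'.
  have -> : u1 - w1 - (u1' - w1') = (u1 - u1') - (w1 - w1') by ring.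
  have -> : u2 - w2 - (u2' - w2') = (u2 - u2') - (w2 - w2') by ring.
  have := h2ineq' (u1 - u1') (w1 - w1'); have := h2ineq' (u2 - u2') (w2 - w2'); lra.
have M : forall X Y Z : R, X <= gg * Y -> Y <= Z -> X <= gg * Z.
  by move=> X Y Z h1 h2; apply: le_trans h1 _; apply: ler_wpM2l.
have {}P12 := M _ _ _ P12 (E _ _ _ _ _ _ _ _). have {}P13 := M _ _ _ P13 (E _ _ _ _ _ _ _ _).
have {}P23 := M _ _ _ P23 (E _ _ _ _ _ _ _ _). have {}P21 := M _ _ _ P21 (E _ _ _ _ _ _ _ _).
have {}P31 := M _ _ _ P31 (E _ _ _ _ _ _ _ _). have {}P32 := M _ _ _ P32 (E _ _ _ _ _ _ _ _).
have L1 := L (fx c bd1 bd2) (fx c bd1 bd3) (fx c' bd1 bd2) (fx c' bd1 bd3) (fy c bd1 bd2) (fy c bd1 bd3) (fy c' bd1 bd2) (fy c' bd1 bd3).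
have L2 := L (fx c bd2 bd1) (fx c bd2 bd3) (fx c' bd2 bd1) (fx c' bd2 bd3) (fy c bd2 bd1) (fy c bd2 bd3) (fy c' bd2 bd1) (fy c' bd2 bd3).
have L3 := L (fx c bd3 bd1) (fx c bd3 bd2) (fx c' bd3 bd1) (fx c' bd3 bd2) (fy c bd3 bd1) (fy c bd3 bd2) (fy c' bd3 bd1) (fy c' bd3 bd2).
set Q1 := ((c bd1).1 - (c' bd1).1) ^+ 2 + ((c bd1).2 - (c' bd1).2) ^+ 2 in P12 P13 P23 P21 P31 P32 *.
set Q2 := ((c bd2).1 - (c' bd2).1) ^+ 2 + ((c bd2).2 - (c' bd2).2) ^+ 2 in P12 P13 P23 P21 P31 P32 *.
set Q3 := ((c bd3).1 - (c' bd3).1) ^+ 2 + ((c bd3).2 - (c' bd3).2) ^+ 2 in P12 P13 P23 P21 P31 P32 *.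
have -> : 512 * G^+3 * (Q1 + Q2 + Q3) = 16 * (gg * Q1) + 16 * (gg * Q2) + 16 * (gg * Q3) by rewrite /gg; ring.
rewrite !mulrDr in P12 P13 P23 P21 P31 P32.
rewrite ![gg * (2 * _)]mulrCA in P12 P13 P23 P21 P31 P32.
rewrite /Q1 /Q2 /Q3 !mulrDr.
lra.
Qed.



Definition Dv (c u c' u' : 'I_3 -> pt R) := PD c c' + PD u u'.
Definition Dpv (c u c' u' : 'I_3 -> pt R) :=
  \sum_(i < 3) (2 * (((c i).1 - (c' i).1) * ((u i).1 - (u' i).1) + ((c i).2 - (c' i).2) * ((u i).2 - (u' i).2))
   + 2 * (((u i).1 - (u' i).1) * ((force c i).1 - (force c' i).1) + ((u i).2 - (u' i).2) * ((force c i).2 - (force c' i).2))).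

Lemma PD_ge0 c c' : 0 <= PD c c'.
Proof. by rewrite /PD sumr_ge0 // => i _; rewrite addr_ge0 // sqr_ge0. Qed.

Lemma term_le (a1 a2 b1 b2 f1 f2 : R) :
  `|2 * (a1 * b1 + a2 * b2) + 2 * (b1 * f1 + b2 * f2)| <=
   (a1^+2 + a2^+2) + 2 * (b1^+2 + b2^+2) + (f1^+2 + f2^+2).
Proof.
rewrite ler_norml; apply/andP; split.
  have := sqr_ge0 (a1 + b1); have := sqr_ge0 (a2 + b2);
  have := sqr_ge0 (b1 + f1); have := sqr_ge0 (b2 + f2).
  rewrite !sqrrD; lra.
have := sqr_ge0 (a1 - b1); have := sqr_ge0 (a2 - b2);
have := sqr_ge0 (b1 - f1); have := sqr_ge0 (b2 - f2).
rewrite !sqrrB; lra.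
Qed.

Lemma Dpv_bound c u c' u' G : good c G -> good c' G -> 0 <= G ->
  `|Dpv c u c' u'| <= (2 + 512 * G^+3) * Dv c u c' u'.
Proof.
move=> g g' G0.
have F := forceLip g g' G0.
have P1 := PD_ge0 c c'. have P2 := PD_ge0 u u'.
have S : `|Dpv c u c' u'| <= PD c c' + 2 * PD u u' + FD c c'.
  rewrite /Dpv /PD /FD mulr_sumr -!big_split /=.
  apply: le_trans (ler_norm_sum _ _ _) _.
  apply: ler_sum => i _; exact: term_le.
have K0 : 0 <= 512 * G^+3 by rewrite mulr_ge0 // exprn_ge0.
rewrite /Dv; move: S F K0 P1 P2.
set K := 512 * G^+3; set P := PD c c'; set Q := PD u u'; set X := `|_|; set Y := FD c c'.
nra.
Qed.



Lemma nbhs0P (Q : R -> Prop) : (\forall h \near (0:R), Q h) <-> exists2 d : R, 0 < d & forall h, `|h| < d -> Q h.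
Proof.
split.
  move=> /nbhs_ballP [d d0 H]; exists d => // h hd; apply: H; rewrite /ball /= sub0r normrN //.
move=> [d d0 H]; apply/nbhs_ballP; exists d => // h; rewrite /ball /= sub0r normrN; exact: H.
Qed.

Lemma derivW_eps (f : R -> R) t l : derivW f t l ->
  forall e, 0 < e -> exists2 d : R, 0 < d & forall h, `|h| < d -> h != 0 -> 0 <= t + h <= 1 ->
    `|l - h^-1 * (f (t + h) - f t)| < e.
Proof.
move=> /cvgrPdist_lt H e e0; have := H e e0.
rewrite /within /= => /nbhs0P [d d0 Hd]; exists d => // h hd h0 ht.
by apply: Hd => //.
Qed.

Lemma eps_derivW (f : R -> R) t l :
  (forall e, 0 < e -> exists2 d : R, 0 < d & forall h, `|h| < d -> h != 0 -> 0 <= t + h <= 1 ->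
    `|l - h^-1 * (f (t + h) - f t)| < e) -> derivW f t l.
Proof.
move=> H; apply/cvgrPdist_lt => e e0; have [d d0 Hd] := H e e0.
rewrite /within /=; apply/nbhs0P; exists d => // h hd [h0 ht]; exact: Hd.
Qed.

Lemma derivW_cw (f : R -> R) t l : derivW f t l ->
  forall e, 0 < e -> exists2 d : R, 0 < d & forall x, `|x - t| < d -> 0 <= x <= 1 -> `|f x - f t| < e.
Proof.
move=> /derivW_eps H e e0.
have [d1 d10 Hd1] := H 1 ltr01.
have L0 : 0 < `|l| + 1 by rewrite ltr_pwDr.
exists (Num.min d1 (e / (`|l| + 1))).
  by rewrite lt_min d10 divr_gt0.
move=> x; rewrite lt_min => /andP [xd1 xe] x01.
have [->|xt] := eqVneq x t; first by rewrite subrr normr0.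
set h := x - t.
have h0 : h != 0 by rewrite subr_eq0.
have := Hd1 h xd1 h0; rewrite /h addrC subrK => /(_ x01) Hq.
set q := (x - t)^-1 * (f x - f t) in Hq.
have eq : f x - f t = (x - t) * q by rewrite /q mulrA mulfV ?mul1r.
have qb : `|q| <= `|l| + 1.
  have -> : q = l - (l - q) by ring.
  by apply: le_trans (ler_normB _ _) _; rewrite lerD2l ltW.
rewrite eq normrM.
apply: (le_lt_trans (ler_wpM2l (normr_ge0 _) qb)).
by rewrite -ltr_pdivlMr.
Qed.

Lemma cw_filter (f : R -> R) t (F : set_system R) {FF : Filter F} :
  (forall e, 0 < e -> exists2 d : R, 0 < d & forall x, `|x - t| < d -> 0 <= x <= 1 -> `|f x - f t| < e) ->
  F --> t -> (\forall x \near F, 0 <= x <= 1) -> f @ F --> f t.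
Proof.
move=> H Ft F01; apply/cvgrPdist_lt => e e0.
have [d d0 Hd] := H e e0.
have Fd : \forall x \near F, `|t - x| < d by move/cvgrPdist_lt : Ft; apply.
near=> x.
rewrite distrC; apply: Hd; last by near: x.
by rewrite distrC; near: x.
Unshelve. all: end_near.
Qed.

Lemma derivW_uniq (f : R -> R) t a b : 0 < t <= 1 -> derivW f t a -> derivW f t b -> a = b.
Proof.
move=> /andP [t0 t1] /derivW_eps Ha /derivW_eps Hb.
apply/eqP; rewrite -subr_eq0 -normr_le0.
apply/ler_addgt0Pr => e e0; rewrite add0r.
have e20 : 0 < e / 2 by rewrite divr_gt0.
have [d1 d10 H1] := Ha _ e20; have [d2 d20 H2] := Hb _ e20.
set h := - (Num.min (Num.min d1 d2) t / 2).
have m0 : 0 < Num.min (Num.min d1 d2) t by rewrite !lt_min d10 d20 t0.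
have hn : `|h| = Num.min (Num.min d1 d2) t / 2.
  by rewrite /h normrN ger0_norm // divr_ge0 // ltW.
have hlt : `|h| < Num.min (Num.min d1 d2) t by rewrite hn ltr_pdivrMr // ltr_pMr // ltr1n.
move: hlt; rewrite !lt_min => /andP [/andP [hd1 hd2] ht].
have h0 : h != 0 by rewrite -normr_eq0 hn gt_eqF // divr_gt0.
have ht01 : 0 <= t + h <= 1.
  apply/andP; split.
    have nh := ler_norm (- h); rewrite normrN in nh; lra.
  have : 0 <= - h by rewrite /h opprK divr_ge0 // ltW.
  lra.
have := H1 h hd1 h0 ht01; have := H2 h hd2 h0 ht01.
set q := h^-1 * _ => A B.
have : `|a - b| <= `|a - q| + `|b - q|.
  have -> : a - b = (a - q) - (b - q) by ring.
  exact: ler_normB.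
lra.
Qed.

Lemma derivW_ext (f g : R -> R) t l : (forall s, 0 <= s <= 1 -> f s = g s) -> 0 <= t <= 1 ->
  derivW f t l -> derivW g t l.
Proof.
move=> fg t01 /derivW_eps H; apply: eps_derivW => e e0.
have [d d0 Hd] := H e e0; exists d => // h hd h0 ht.
by rewrite -!fg //; apply: Hd.
Qed.

Lemma derivW_cst (c t : R) : derivW (fun _ => c) t 0.
Proof.
apply: eps_derivW => e e0; exists 1 => // h _ _ _.
by rewrite subrr mulr0 subr0 normr0.
Qed.

Lemma derivW_lin (f g : R -> R) t a b (al be : R) : derivW f t a -> derivW g t b ->
  derivW (fun s => al * f s + be * g s) t (al * a + be * b).
Proof.
move=> Ha Hb; rewrite /derivW.
have -> : (fun h => h^-1 * ((al * f (t + h) + be * g (t + h)) - (al * f t + be * g t))) =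
   (fun h => al * (h^-1 * (f (t + h) - f t)) + be * (h^-1 * (g (t + h) - g t))).
  by apply: funext => h; ring.
by apply: cvgD; apply: cvgMr.
Qed.

Lemma derivW_is_derive (f : R -> R) t l : 0 < t < 1 -> derivW f t l -> is_derive t 1 f l.
Proof.
move=> /andP [t0 t1] /derivW_eps H.
have C : (fun h => h^-1 *: ((f \o shift t) (h *: 1) - f t)) @ 0^' --> l.
  apply/cvgrPdist_lt => e e0; have [d d0 Hd] := H e e0.
  rewrite /dnbhs /within /=; apply/nbhs0P.
  exists (Num.min d (Num.min t (1 - t))).
    by rewrite !lt_min d0 t0 subr_gt0 t1.
  move=> h; rewrite !lt_min => /andP [hd /andP [ht ht1]] h0.
  rewrite /shift /=.
  have E : h^-1 *: (f (h%:A + t) - f t) = h^-1 * (f (t + h) - f t).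
    first [ by rewrite [h%:A]mulr1 (addrC h) | by rewrite /GRing.scale /= mulr1 (addrC h) | by rewrite -scalerAl mul1r (addrC h) | (rewrite -[LHS]/(h^-1 * (f (h * 1 + t) - f t)); by rewrite mulr1 (addrC h)) ].
  rewrite E.
  apply: Hd => //.
  have := ler_norm h; have := ler_norm (- h); rewrite normrN => *.
  apply/andP; split; lra.
exact: (DeriveDef (cvgP _ C) (cvg_lim _ C)).
Qed.

Definition CW (f : R -> R) t := forall e, 0 < e -> exists2 d : R, 0 < d &
  forall x, `|x - t| < d -> 0 <= x <= 1 -> `|f x - f t| < e.

Lemma CW_left f t : 0 < t <= 1 -> CW f t -> f @ t^'- --> f t.
Proof.
move=> /andP [t0 t1] H; apply: cw_filter H _ _.
  exact: (cvg_at_left_filter (f := id) cvg_id).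
near=> y; apply/andP; split.
  by near: y; apply: nbhs_left_ge.
apply: (le_trans _ t1); apply: ltW; near: y; exact: nbhs_left_lt.
Unshelve. all: end_near.
Qed.

Lemma CW_right f t : 0 <= t < 1 -> CW f t -> f @ t^'+ --> f t.
Proof.
move=> /andP [t0 t1] H; apply: cw_filter H _ _.
  exact: (cvg_at_right_filter (f := id) cvg_id).
near=> y; apply/andP; split.
  by apply: (le_trans t0); apply: ltW; near: y; apply: nbhs_right_gt.
apply: ltW; near: y; exact: nbhs_right_lt.
Unshelve. all: end_near.
Qed.

Lemma CW_at f t : 0 < t < 1 -> CW f t -> f @ t --> f t.
Proof.
move=> /andP [t0 t1] H; apply: cw_filter H _ _.
  exact: cvg_id.
apply/nbhs_ballP; exists (Num.min t (1 - t)).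
  by rewrite /= lt_min t0 subr_gt0 t1.
move=> y; rewrite /ball /= lt_min => /andP [a b].
have := ler_norm (t - y); have := ler_norm (- (t - y)); rewrite normrN => *.
apply/andP; split; lra.
Qed.

Lemma isd_add (f g : R -> R) (x a b : R) : is_derive x 1 f a -> is_derive x 1 g b ->
  is_derive x 1 (fun y => f y + g y) (a + b).
Proof. move=> ha hb; exact: is_deriveD. Qed.

Lemma isd_sub (f g : R -> R) (x a b : R) : is_derive x 1 f a -> is_derive x 1 g b ->
  is_derive x 1 (fun y => f y - g y) (a - b).
Proof. move=> ha hb; exact: is_deriveB. Qed.

Lemma isd_mul (f g : R -> R) (x a b : R) : is_derive x 1 f a -> is_derive x 1 g b ->
  is_derive x 1 (fun y => f y * g y) (f x * b + g x * a).
Proof. move=> ha hb; exact: is_deriveM. Qed.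

Lemma isd_sqdiff (f g : R -> R) (x a b : R) : is_derive x 1 f a -> is_derive x 1 g b ->
  is_derive x 1 (fun y => (f y - g y)^+2) (2 * (f x - g x) * (a - b)).
Proof.
move=> ha hb; have hs := isd_sub ha hb.
have hm := isd_mul hs hs.
have -> : (fun y => (f y - g y)^+2) = fun y => (f y - g y) * (f y - g y).
  by apply: funext => y; rewrite expr2.
apply: (is_derive_eq hm); rewrite /=; ring.
Qed.

Lemma isd_sum3 (h : 'I_3 -> R -> R) (x : R) (dh : 'I_3 -> R) : (forall i, is_derive x 1 (h i) (dh i)) ->
  is_derive x 1 (fun y => \sum_(i < 3) h i y) (\sum_(i < 3) dh i).
Proof.
move=> H; have := is_derive_sum H.
have -> : (\sum_(i < 3) h i) = (fun y => \sum_(i < 3) h i y).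
  by apply: funext => y; rewrite fct_sumE.
by [].
Qed.

Lemma isd_lin (c x : R) : is_derive x 1 (fun y => c * y) c.
Proof.
have h := @is_deriveZ R R R id c x 1 1 (is_derive_id x 1).
have -> : (fun y => c * y) = c *: (id : R -> R) by apply: funext => y.
by apply: (is_derive_eq h); rewrite /= ?mulr1 //; rewrite -[c *: (1:R)]/(c * 1) mulr1.
Qed.

Lemma isd_explin (c x : R) : is_derive x 1 (fun y => expR (c * y)) (expR (c * x) * c).
Proof.
have h := @is_derive1_comp R expR (fun y => c * y) x _ _ (is_derive_expR (c * x)) (isd_lin c x).
exact: h.
Qed.

Lemma cont_explin (c : R) : continuous (fun y => expR (c * y)).
Proof.
move=> x; apply: continuous_comp; last exact: continuous_expR.
apply: continuousM; [exact: cvg_cst | exact: cvg_id].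
Qed.

Lemma gronwall (D dD : R -> R) (L a b t0 : R) :
  a < b -> a <= t0 <= b ->
  (forall x, a < x < b -> is_derive x 1 D (dD x)) ->
  {within `[a, b], continuous D} ->
  (forall x, a < x < b -> `|dD x| <= L * D x) ->
  (forall x, a <= x <= b -> 0 <= D x) -> D t0 = 0 ->
  forall t, a <= t <= b -> D t = 0.
Proof.
move=> ab /andP [at0 t0b] dD_ cD bnd pos D0 t /andP [hat tb].
have sub : forall u w, a <= u -> w <= b -> `]u, w[ `<=` `]a, b[.
  move=> u w au wb x /=; rewrite !in_itv /= => /andP [ux xw].
  by rewrite (le_lt_trans au ux) (lt_le_trans xw wb).
have subc : forall u w, a <= u -> w <= b -> `[u, w] `<=` `[a, b].
  move=> u w au wb x /=; rewrite !in_itv /= => /andP [ux xw].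
  by rewrite (le_trans au ux) (le_trans xw wb).
have Dt0 : 0 <= D t by apply: pos; rewrite hat tb.
case: (lerP t0 t) => [tt0|tt0].
  pose E := fun y => D y * expR ((- L) * y).
  have dE : forall x, x \in `]t0, t[ -> is_derive x 1 E (D x * (expR ((- L) * x) * (- L)) + expR ((- L) * x) * dD x).
    move=> x xin; have := sub t0 t at0 tb x xin; rewrite /= in_itv /= => xab.
    exact: isd_mul (dD_ x xab) (isd_explin (- L) x).
  have cE : {within `[t0, t], continuous E}.
    have cD' : {within `[t0, t], continuous D} by apply: continuous_subspaceW cD; apply: subc.
    have cX : {within `[t0, t], continuous (fun y => expR ((- L) * y))}.
      by apply: continuous_subspaceT; exact: cont_explin.
    move=> x; exact: (continuousM (cD' x) (cX x)).
  case: (eqVneq t0 t) => [<-|tn]; first by [].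
  have tlt : t0 < t by rewrite lt_neqAle tn tt0.
  have [c cin EQ] := MVT tlt dE cE.
  have : E t <= 0.
    have : E t - E t0 <= 0.
      rewrite EQ; apply: mulr_le0_ge0; last by rewrite subr_ge0.
      have cab : a < c < b by have := sub t0 t at0 tb c cin; rewrite /= in_itv.
      have ex0 := expR_gt0 ((- L) * c).
      have B := bnd c cab.
      have B' := ler_norm (dD c).
      have -> : D c * (expR (- L * c) * - L) + expR (- L * c) * dD c =
                expR (- L * c) * (dD c - L * D c) by ring.
      apply: mulr_ge0_le0; first exact: ltW.
      lra.
    by rewrite /E D0 mul0r subr0.
  rewrite /E => H; have ex0 := expR_gt0 ((- L) * t).
  by apply/eqP; rewrite eq_le Dt0 andbT -(pmulr_rle0 _ ex0) mulrC.
pose E := fun y => D y * expR (L * y).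
have dE : forall x, x \in `]t, t0[ -> is_derive x 1 E (D x * (expR (L * x) * L) + expR (L * x) * dD x).
  move=> x xin; have := sub t t0 hat t0b x xin; rewrite /= in_itv /= => xab.
  exact: isd_mul (dD_ x xab) (isd_explin L x).
have cE : {within `[t, t0], continuous E}.
  have cD' : {within `[t, t0], continuous D} by apply: continuous_subspaceW cD; apply: subc.
  have cX : {within `[t, t0], continuous (fun y => expR (L * y))}.
    by apply: continuous_subspaceT; exact: cont_explin.
  move=> x; exact: (continuousM (cD' x) (cX x)).
have [c cin EQ] := MVT tt0 dE cE.
have : E t <= 0.
  have : 0 <= E t0 - E t.
    rewrite EQ; apply: mulr_ge0; last by rewrite subr_ge0 ltW.
    have cab : a < c < b by have := sub t t0 hat t0b c cin; rewrite /= in_itv.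
    have ex0 := expR_gt0 (L * c).
    have B := bnd c cab.
    have B' := ler_norm (- dD c); rewrite normrN in B'.
    have -> : D c * (expR (L * c) * L) + expR (L * c) * dD c =
              expR (L * c) * (dD c + L * D c) by ring.
    apply: mulr_ge0; first exact: ltW.
    lra.
  by rewrite /E D0 mul0r sub0r oppr_ge0.
rewrite /E => H; have ex0 := expR_gt0 (L * t).
by apply/eqP; rewrite eq_le Dt0 andbT -(pmulr_rle0 _ ex0) mulrC.
Qed.


End Main.

Section E.
Variable R : realType.

Definition sol (q v : 'I_3 -> R -> pt R) := forall t : R, 0 < t <= 1 -> forall i : 'I_3,
    derivW (fun s => (q i s).1) t (v i t).1 /\
    derivW (fun s => (q i s).2) t (v i t).2 /\
    derivW (fun s => (v i s).1) t (force (fun j => q j t) i).1 /\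
    derivW (fun s => (v i s).2) t (force (fun j => q j t) i).2.

Lemma ord3 (i : 'I_3) : i = bd1 \/ i = bd2 \/ i = bd3.
Proof.
case: i => [[|[|[|n]]] Hn].
- by left; apply: val_inj.
- by right; left; apply: val_inj.
- by right; right; apply: val_inj.
- by [].
Qed.

Lemma cvg_sqdiff (F : set_system R) {FF : Filter F} (f g : R -> R) (a b : R) :
  f @ F --> a -> g @ F --> b -> (fun s => (f s - g s)^+2) @ F --> (a - b)^+2.
Proof.
move=> fa gb.
have -> : (fun s => (f s - g s)^+2) = (fun s => (f s - g s) * (f s - g s)).
  by apply: funext => s; rewrite expr2.
rewrite expr2; apply: cvgM; apply: cvgB => //.
Qed.

Lemma cvg_ip (F : set_system R) {FF : Filter F} (x1 y1 x2 y2 : R -> R) (a1 b1 a2 b2 : R) :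
  x1 @ F --> a1 -> y1 @ F --> b1 -> x2 @ F --> a2 -> y2 @ F --> b2 ->
  (a1 - b1)^+2 + (a2 - b2)^+2 != 0 ->
  (fun s => ((x1 s - y1 s)^+2 + (x2 s - y2 s)^+2)^-1) @ F --> ((a1 - b1)^+2 + (a2 - b2)^+2)^-1.
Proof.
move=> h1 h2 h3 h4 nz.
apply: cvgV => //.
by apply: cvgD; apply: cvg_sqdiff.
Qed.

Lemma sqd_pos (a b : pt R) : a != b -> 0 < sqd a b.
Proof.
move=> ab; rewrite /sqd lt_def addr_ge0 ?sqr_ge0 // andbT.
apply/negP => /eqP H.
have h1 : (a.1 - b.1)^+2 = 0.
  by apply/eqP; rewrite eq_le sqr_ge0 andbT; have := sqr_ge0 (a.2 - b.2); lra.
have h2 : (a.2 - b.2)^+2 = 0.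
  by apply/eqP; rewrite eq_le sqr_ge0 andbT; have := sqr_ge0 (a.1 - b.1); lra.
clear H; move: h1 h2 => /eqP; rewrite sqrf_eq0 subr_eq0 => /eqP e1 /eqP; rewrite sqrf_eq0 subr_eq0 => /eqP e2.
by move: ab; case: a e1 e2 => a1 a2; case: b => b1 b2 /= -> ->; rewrite eqxx.
Qed.

Definition ip (c : 'I_3 -> pt R) (i j : 'I_3) := (sqd (c j) (c i))^-1.
Definition ipsum (c : 'I_3 -> pt R) :=
  ip c bd1 bd2 + ip c bd1 bd3 + ip c bd2 bd1 + ip c bd2 bd3 + ip c bd3 bd1 + ip c bd3 bd2.

Definition cfree (c : 'I_3 -> pt R) := forall i j : 'I_3, i != j -> c i != c j.

Lemma good_of (c : 'I_3 -> pt R) G : cfree c -> ipsum c <= G -> good c G.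
Proof.
move=> cf cG i j ij.
have pos : forall i j : 'I_3, i != j -> 0 < sqd (c j) (c i).
  by move=> i' j' h; apply: sqd_pos; apply: cf; rewrite eq_sym.
split; first exact: pos.
have P : forall i j : 'I_3, i != j -> 0 <= (sqd (c j) (c i))^-1.
  by move=> i' j' h; rewrite invr_ge0 ltW // pos.
have p12 := P bd1 bd2 isT. have p13 := P bd1 bd3 isT. have p21 := P bd2 bd1 isT.
have p23 := P bd2 bd3 isT. have p31 := P bd3 bd1 isT. have p32 := P bd3 bd2 isT.
move: cG; rewrite /ipsum /ip => cG.
move: ij; have [->|[->|->]] := ord3 i; have [->|[->|->]] := ord3 j;
  rewrite ?eqxx // => _; lra.
Qed.

Section Uniq.
Variables (q v q' v' : 'I_3 -> R -> pt R).

Definition hterm (i : 'I_3) (s : R) :=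
  ((q i s).1 - (q' i s).1)^+2 + ((q i s).2 - (q' i s).2)^+2 +
  ((v i s).1 - (v' i s).1)^+2 + ((v i s).2 - (v' i s).2)^+2.
Definition Dfun (s : R) := \sum_(i < 3) hterm i s.
Definition dterm (i : 'I_3) (s : R) :=
  2 * ((q i s).1 - (q' i s).1) * ((v i s).1 - (v' i s).1) +
  2 * ((q i s).2 - (q' i s).2) * ((v i s).2 - (v' i s).2) +
  2 * ((v i s).1 - (v' i s).1) * ((force (fun j => q j s) i).1 - (force (fun j => q' j s) i).1) +
  2 * ((v i s).2 - (v' i s).2) * ((force (fun j => q j s) i).2 - (force (fun j => q' j s) i).2).
Definition dDfun (s : R) := \sum_(i < 3) dterm i s.

Lemma Dfun_Dv s : Dfun s = Dv (fun j => q j s) (fun j => v j s) (fun j => q' j s) (fun j => v' j s).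
Proof. by rewrite /Dfun /Dv /PD -big_split; apply: eq_bigr => i _; rewrite /hterm /=; ring. Qed.

Lemma dDfun_Dpv s : dDfun s = Dpv (fun j => q j s) (fun j => v j s) (fun j => q' j s) (fun j => v' j s).
Proof. by rewrite /dDfun /Dpv; apply: eq_bigr => i _; rewrite /dterm /=; ring. Qed.

Lemma Dfun_ge0 s : 0 <= Dfun s.
Proof. by rewrite /Dfun sumr_ge0 // => i _; rewrite /hterm !addr_ge0 // sqr_ge0. Qed.

Hypothesis Hs : sol q v.
Hypothesis Hs' : sol q' v'.

Lemma Dfun_deriv (x : R) : 0 < x < 1 -> is_derive x 1 Dfun (dDfun x).
Proof.
move=> x01.
have x01' : 0 < x <= 1 by case/andP: x01 => -> /ltW ->.
apply: isd_sum3 => i.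
have [a1 [a2 [a3 a4]]] := Hs x01' i.
have [b1 [b2 [b3 b4]]] := Hs' x01' i.
have D : forall (f : R -> R) (l : R), derivW f x l -> is_derive x 1 f l.
  by move=> f l h; exact: derivW_is_derive x01 h.
rewrite /hterm /dterm.
apply: isd_add; [apply: isd_add; [apply: isd_add|]|];
  apply: isd_sqdiff; apply: D; eassumption.
Qed.

Lemma sol_CW (qq vv : 'I_3 -> R -> pt R) (x : R) : sol qq vv -> 0 < x <= 1 -> forall i,
  CW (fun s => (qq i s).1) x /\ CW (fun s => (qq i s).2) x /\
  CW (fun s => (vv i s).1) x /\ CW (fun s => (vv i s).2) x.
Proof.
move=> H x01 i; have [a1 [a2 [a3 a4]]] := H x x01 i.
by split; [|split; [|split]]; apply: derivW_cw; eassumption.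
Qed.

Section Cvg.
Variables (F : set_system R) (FF : Filter F) (x : R).
Hypothesis T : forall f : R -> R, CW f x -> f @ F --> f x.
Hypothesis x01 : 0 < x <= 1.

Lemma Dfun_cvg : Dfun @ F --> Dfun x.
Proof.
have -> : Dfun = fun s => hterm bd1 s + hterm bd2 s + hterm bd3 s.
  by apply: funext => s; rewrite /Dfun sum3.
have Hh : forall i, hterm i @ F --> hterm i x.
  move=> i; have [a1 [a2 [a3 a4]]] := sol_CW Hs x01 i.
  have [b1 [b2 [b3 b4]]] := sol_CW Hs' x01 i.
  rewrite /hterm; apply: cvgD; [apply: cvgD; [apply: cvgD|]|];
    apply: cvg_sqdiff; apply: T; eassumption.
by apply: cvgD; [apply: cvgD|]; apply: Hh.
Qed.

Definition gfun (s : R) := ipsum (fun j => q j s) + ipsum (fun j => q' j s).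

Lemma ip_cvg (qq vv : 'I_3 -> R -> pt R) : sol qq vv -> cfree (fun j => qq j x) ->
  forall i j, i != j -> (fun s => ip (fun k => qq k s) i j) @ F --> ip (fun k => qq k x) i j.
Proof.
move=> H cf i j ij.
have [a1 [a2 _]] := sol_CW H x01 i.
have [b1 [b2 _]] := sol_CW H x01 j.
rewrite /ip /sqd; apply: cvg_ip; try (apply: T; eassumption).
rewrite gt_eqF //; have := sqd_pos (cf j i _); rewrite eq_sym => /(_ ij); exact.
Qed.

Lemma gfun_cvg : cfree (fun j => q j x) -> cfree (fun j => q' j x) -> gfun @ F --> gfun x.
Proof.
move=> c1 c2.
have A := ip_cvg Hs c1. have B := ip_cvg Hs' c2.
rewrite /gfun /ipsum.
by repeat apply: cvgD; (apply: A || apply: B).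
Qed.
End Cvg.

Lemma ipsum_ge0 (c : 'I_3 -> pt R) : cfree c -> 0 <= ipsum c.
Proof.
move=> cf.
have P : forall i j : 'I_3, i != j -> 0 <= ip c i j.
  by move=> i j h; rewrite /ip invr_ge0 ltW // sqd_pos // cf // eq_sym.
rewrite /ipsum; have := P bd1 bd2 isT; have := P bd1 bd3 isT; have := P bd2 bd1 isT;
have := P bd2 bd3 isT; have := P bd3 bd1 isT; have := P bd3 bd2 isT; lra.
Qed.

Lemma within_cont (f : R -> R) (a : R) : 0 < a < 1 ->
  (forall y : R, 0 < y < 1 -> f @ y --> f y) -> f @ a^'+ --> f a -> f @ (1:R)^'- --> f 1 ->
  {within `[a, 1], continuous f}.
Proof.
move=> /andP [a0 a1] Hi Ha H1; apply/continuous_within_itvP => //; split => //.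
move=> y; rewrite in_itv /= => /andP [ay y1]; apply: Hi.
by rewrite (lt_trans a0 ay) y1.
Qed.

Lemma uniq_sol (t0 : R) : 0 < t0 <= 1 -> (forall i, q i t0 = q' i t0 /\ v i t0 = v' i t0) ->
  (forall s, 0 < s <= 1 -> cfree (fun j => q j s)) ->
  (forall s, 0 < s <= 1 -> cfree (fun j => q' j s)) ->
  forall t, 0 < t <= 1 -> forall i, q i t = q' i t.
Proof.
move=> t0in agree cq cq' t tin.
have D0 : Dfun t0 = 0.
  rewrite /Dfun; apply: big1 => i _; rewrite /hterm.
  by have [-> ->] := agree i; rewrite !subrr expr0n /= !addr0.
suff Dt : Dfun t = 0.
  move=> i; move: Dt; rewrite /Dfun sum3 => Dt.
  have hp : forall j, 0 <= hterm j t by move=> j; rewrite /hterm !addr_ge0 // sqr_ge0.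
  have hi : hterm i t = 0.
    have := hp bd1; have := hp bd2; have := hp bd3.
    by have [->|[->|->]] := ord3 i => *; apply/eqP; rewrite eq_le hp andbT; lra.
  move: hi; rewrite /hterm => hi.
  have e1 : ((q i t).1 - (q' i t).1)^+2 = 0.
    apply/eqP; rewrite eq_le sqr_ge0 andbT.
    have := sqr_ge0 ((q i t).2 - (q' i t).2); have := sqr_ge0 ((v i t).1 - (v' i t).1);
    have := sqr_ge0 ((v i t).2 - (v' i t).2); lra.
  have e2 : ((q i t).2 - (q' i t).2)^+2 = 0.
    apply/eqP; rewrite eq_le sqr_ge0 andbT.
    have := sqr_ge0 ((q i t).1 - (q' i t).1); have := sqr_ge0 ((v i t).1 - (v' i t).1);
    have := sqr_ge0 ((v i t).2 - (v' i t).2); lra.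
  move: e1 e2 => /eqP; rewrite sqrf_eq0 subr_eq0 => /eqP e1 /eqP; rewrite sqrf_eq0 subr_eq0 => /eqP e2.
  by move: e1 e2; case: (q i t) => ? ?; case: (q' i t) => ? ? /= -> ->.
move: t0in tin => /andP [t00 t01] /andP [t0' t1].
set a := Num.min t t0.
have a0 : 0 < a by rewrite lt_min t0' t00.
have a1 : a <= 1 by rewrite ge_min t1.
have at_ : a <= t by rewrite ge_min lexx.
have at0 : a <= t0 by rewrite ge_min lexx orbT.
case: (eqVneq a 1) => [ae1|an1].
  have e1 : t = 1 by apply/eqP; rewrite eq_le t1 -ae1 at_.
  have e2 : t0 = 1 by apply/eqP; rewrite eq_le t01 -ae1 at0.
  by rewrite e1 -e2.
have alt1 : a < 1 by rewrite lt_neqAle an1 a1.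
have a01 : 0 < a < 1 by rewrite a0 alt1.
have Tint : forall y : R, 0 < y < 1 -> forall f : R -> R, CW f y -> f @ y --> f y.
  by move=> y y01 f; exact: CW_at y01.
have Tright : forall f, CW f a -> f @ a^'+ --> f a.
  by move=> f; apply: CW_right; rewrite (ltW a0) alt1.
have Tleft : forall f, CW f 1 -> f @ (1:R)^'- --> f 1.
  by move=> f; apply: CW_left; rewrite ltr01 ?lexx.
have y01 : forall y : R, 0 < y < 1 -> 0 < y <= 1 by move=> y /andP [-> /ltW ->].
have a01' : 0 < a <= 1 by rewrite a0 a1.
have one01 : 0 < (1:R) <= 1 by rewrite ltr01 lexx.
have cD : {within `[a, 1], continuous Dfun}.
  apply: within_cont => //.
  - by move=> y yy; apply: (Dfun_cvg _ (Tint y yy)); apply: y01.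
  - exact: Dfun_cvg _ Tright a01'.
  - exact: Dfun_cvg _ Tleft one01.
have cG : {within `[a, 1], continuous gfun}.
  apply: within_cont => //.
  - move=> y yy; apply: (gfun_cvg _ (Tint y yy)); [exact: y01|exact: cq (y01 _ yy)|exact: cq' (y01 _ yy)].
  - by apply: (gfun_cvg _ Tright a01'); [exact: cq a01'|exact: cq' a01'].
  - by apply: (gfun_cvg _ Tleft one01); [exact: cq one01|exact: cq' one01].
have [c cin cmax] := EVT_max a1 cG.
set G := gfun c.
have yin : forall y : R, a <= y <= 1 -> 0 < y <= 1.
  by move=> y /andP [ay ->]; rewrite (lt_le_trans a0 ay).
have cin' : a <= c <= 1 by move: cin; rewrite in_itv.
have G0 : 0 <= G.
  by rewrite /G /gfun addr_ge0 // ipsum_ge0 //; [apply: cq | apply: cq']; apply: yin.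
have good1 : forall y : R, a <= y <= 1 -> good (fun j => q j y) G.
  move=> y yr; apply: good_of; first by apply: cq; apply: yin.
  have := cmax y; rewrite in_itv /= => /(_ yr); rewrite /G /gfun.
  have := ipsum_ge0 (cq' y (yin y yr)); lra.
have good2 : forall y : R, a <= y <= 1 -> good (fun j => q' j y) G.
  move=> y yr; apply: good_of; first by apply: cq'; apply: yin.
  have := cmax y; rewrite in_itv /= => /(_ yr); rewrite /G /gfun.
  have := ipsum_ge0 (cq y (yin y yr)); lra.
apply: (@gronwall _ Dfun dDfun (2 + 512 * G^+3) a 1 t0) => //.
- by rewrite at0.
- move=> x /andP [ax x1]; apply: Dfun_deriv; by rewrite (lt_trans a0 ax) x1.
- move=> x /andP [ax x1]; rewrite Dfun_Dv dDfun_Dpv.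
  by apply: Dpv_bound => //; [apply: good1 | apply: good2]; rewrite ltW // ltW.
- by move=> x _; apply: Dfun_ge0.
- by rewrite at_.
Qed.
End Uniq.
End E.

Section F.
Variable R : realType.

Definition pswap (i : 'I_3) : 'I_3 := if i == bd1 then bd2 else if i == bd2 then bd1 else i.
Definition pi (sw : bool) (i : 'I_3) : 'I_3 := if sw then pswap i else i.
Definition refl (sw : bool) (sx sy : R) (q : 'I_3 -> R -> pt R) : 'I_3 -> R -> pt R :=
  fun i t => (sx * (q (pi sw i) t).1, sy * (q (pi sw i) t).2).
Definition reflc (sw : bool) (sx sy : R) (c : 'I_3 -> pt R) : 'I_3 -> pt R :=
  fun i => (sx * (c (pi sw i)).1, sy * (c (pi sw i)).2).

Lemma edist_refl (sx sy : R) (a b : pt R) : sx^+2 = 1 -> sy^+2 = 1 ->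
  Defs.edist (sx * a.1, sy * a.2) (sx * b.1, sy * b.2) = Defs.edist a b.
Proof.
move=> hx hy; rewrite /Defs.edist /=; congr Num.sqrt.
rewrite -!mulrBr !exprMn hx hy !mul1r //.
Qed.

Lemma fx_refl sw sx sy c i j : sx^+2 = 1 -> sy^+2 = 1 ->
  fx (reflc sw sx sy c) i j = sx * fx c (pi sw i) (pi sw j).
Proof.
move=> hx hy; rewrite /fx /reflc /= edist_refl //; rewrite -mulrBr mulrA //.
Qed.

Lemma fy_refl sw sx sy c i j : sx^+2 = 1 -> sy^+2 = 1 ->
  fy (reflc sw sx sy c) i j = sy * fy c (pi sw i) (pi sw j).
Proof.
move=> hx hy; rewrite /fy /reflc /= edist_refl //; rewrite -mulrBr mulrA //.
Qed.

Lemma pswap1 : pswap bd1 = bd2. Proof. by []. Qed.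
Lemma pswap2 : pswap bd2 = bd1. Proof. by []. Qed.
Lemma pswap3 : pswap bd3 = bd3. Proof. by []. Qed.

Lemma force_refl sw sx sy c i : sx^+2 = 1 -> sy^+2 = 1 ->
  force (reflc sw sx sy c) i = (sx * (force c (pi sw i)).1, sy * (force c (pi sw i)).2).
Proof.
move=> hx hy.
have [->|[->|->]] := ord3 i; rewrite ?force1 ?force2 ?force3 !fx_refl // !fy_refl //;
  case: sw; rewrite /pi ?pswap1 ?pswap2 ?pswap3 ?force1 ?force2 ?force3 /=; congr pair; ring.
Qed.

Lemma derivW_scale (f : R -> R) t a (c : R) : derivW f t a -> derivW (fun s => c * f s) t (c * a).
Proof.
move=> Ha; rewrite /derivW.
have -> : (fun h => h^-1 * (c * f (t + h) - c * f t)) = (fun h => c * (h^-1 * (f (t + h) - f t))).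
  by apply: funext => h; ring.
exact: cvgMr.
Qed.

Lemma derivW_comb3 (f1 f2 f3 : R -> R) t a1 a2 a3 (c1 c2 c3 : R) :
  derivW f1 t a1 -> derivW f2 t a2 -> derivW f3 t a3 ->
  derivW (fun s => c1 * f1 s + c2 * f2 s + c3 * f3 s) t (c1 * a1 + c2 * a2 + c3 * a3).
Proof.
move=> H1 H2 H3; rewrite /derivW.
have -> : (fun h => h^-1 * ((c1 * f1 (t + h) + c2 * f2 (t + h) + c3 * f3 (t + h)) - (c1 * f1 t + c2 * f2 t + c3 * f3 t))) =
  (fun h => c1 * (h^-1 * (f1 (t + h) - f1 t)) + c2 * (h^-1 * (f2 (t + h) - f2 t)) + c3 * (h^-1 * (f3 (t + h) - f3 t))).
  by apply: funext => h; ring.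
by apply: cvgD; [apply: cvgD|]; apply: cvgMr.
Qed.

Lemma sol_refl sw sx sy q v : sx^+2 = 1 -> sy^+2 = 1 -> sol q v -> sol (refl sw sx sy q) (refl sw sx sy v).
Proof.
move=> hx hy H t t01 i; have [a1 [a2 [a3 a4]]] := H t t01 (pi sw i).
have -> : (fun j => refl sw sx sy q j t) = reflc sw sx sy (fun j => q j t) by [].
rewrite force_refl //=.
by split; [|split; [|split]]; apply: derivW_scale.
Qed.

Lemma pi_inj sw : injective (pi sw).
Proof.
move=> i j; case: sw => //=.
by have [->|[->|->]] := ord3 i; have [->|[->|->]] := ord3 j.
Qed.

Lemma cfree_refl sw sx sy q s : sx^+2 = 1 -> sy^+2 = 1 -> cfree (fun j => q j s) ->
  cfree (fun j => refl sw sx sy q j s).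
Proof.
move=> hx hy cf i j ij; apply/negP => /eqP E.
have : q (pi sw i) s = q (pi sw j) s.
  move: E; rewrite /refl => [[e1 e2]].
  have ex : (q (pi sw i) s).1 = (q (pi sw j) s).1.
    by rewrite -[LHS]mul1r -hx expr2 -mulrA e1 mulrA -expr2 hx mul1r.
  have ey : (q (pi sw i) s).2 = (q (pi sw j) s).2.
    by rewrite -[LHS]mul1r -hy expr2 -mulrA e2 mulrA -expr2 hy mul1r.
  by move: ex ey; case: (q (pi sw i) s) => ? ?; case: (q (pi sw j) s) => ? ? /= -> ->.
apply/eqP; apply: cf.
by apply: contra ij => /eqP /pi_inj ->.
Qed.
End F.

Section G.
Variable R : realType.

Lemma sym_fix sw (sx sy : R) q v (t0 : R) : sx^+2 = 1 -> sy^+2 = 1 -> sol q v -> collision_free q ->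
  0 < t0 <= 1 ->
  (forall i, q i t0 = refl sw sx sy q i t0 /\ v i t0 = refl sw sx sy v i t0) ->
  forall t : R, 0 < t <= 1 -> forall i, q i t = refl sw sx sy q i t.
Proof.
move=> hx hy Hs cf t0in agree t tin i.
apply: (uniq_sol Hs (sol_refl sw hx hy Hs) t0in agree) => //.
all: move=> s sin; first [ (move=> i' j' ij; exact: cf s sin i' j' ij) |
  (apply: cfree_refl => // i' j' ij; exact: cf s sin i' j' ij) ].
Qed.

Lemma vel_comb (f1 f2 f3 F : R -> R) (a1 a2 a3 c1 c2 c3 t l : R) : 0 < t <= 1 ->
  derivW f1 t a1 -> derivW f2 t a2 -> derivW f3 t a3 ->
  (forall s, F s = c1 * f1 s + c2 * f2 s + c3 * f3 s) -> derivW F t l -> l = c1 * a1 + c2 * a2 + c3 * a3.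
Proof.
move=> tin H1 H2 H3 FE HF.
have E : F = fun s => c1 * f1 s + c2 * f2 s + c3 * f3 s by apply: funext.
rewrite E in HF; apply: (derivW_uniq tin HF); exact: derivW_comb3.
Qed.

Lemma pair_fix (p : pt R) (a b : R) : p.1 = a -> p.2 = b -> p = (a, b).
Proof. by case: p => ? ? /= -> ->. Qed.

Lemma sq1 : (1:R)^+2 = 1. Proof. by rewrite expr1n. Qed.
Lemma sqN1 : (-1:R)^+2 = 1. Proof. by rewrite sqrrN expr1n. Qed.

Section Core.
Variables (q v : 'I_3 -> R -> pt R) (t0 : R).
Hypothesis Hs : sol q v.
Hypothesis t0in : 0 < t0 <= 1.
Hypothesis Hchi : forall s : R, 0 <= s <= 1 -> in_chi (fun i => q i s).

Let d i := Hs t0in i.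

Lemma chi_facts : (q bd1 t0).1 + (q bd2 t0).1 + (q bd3 t0).1 = 0 /\
  (q bd1 t0).2 + (q bd2 t0).2 + (q bd3 t0).2 = 0.
Proof.
have t01 : 0 <= t0 <= 1 by case/andP: t0in => /ltW -> ->.
by have [h1 h2] := Hchi t01; move: h1 h2; rewrite !sum3.
Qed.

Lemma vchi_facts : (v bd1 t0).1 + (v bd2 t0).1 + (v bd3 t0).1 = 0 /\
  (v bd1 t0).2 + (v bd2 t0).2 + (v bd3 t0).2 = 0.
Proof.
have t01 : 0 <= t0 <= 1 by case/andP: t0in => /ltW -> ->.
have [a1 [a2 _]] := d bd1; have [b1 [b2 _]] := d bd2; have [c1 [c2 _]] := d bd3.
split.
  have Z : derivW (fun s => (q bd1 s).1 + (q bd2 s).1 + (q bd3 s).1) t0 0.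
    apply: (derivW_ext (f := fun _ => 0)) (derivW_cst 0 t0) => // s s01.
    by have [h1 _] := Hchi s01; move: h1; rewrite sum3.
  have := vel_comb (c1 := 1) (c2 := 1) (c3 := 1) t0in a1 b1 c1 _ Z.
  by rewrite !mul1r => -> //; move=> s; rewrite !mul1r.
have Z : derivW (fun s => (q bd1 s).2 + (q bd2 s).2 + (q bd3 s).2) t0 0.
  apply: (derivW_ext (f := fun _ => 0)) (derivW_cst 0 t0) => // s s01.
  by have [_ h2] := Hchi s01; move: h2; rewrite sum3.
have := vel_comb (c1 := 1) (c2 := 1) (c3 := 1) t0in a2 b2 c2 _ Z.
by rewrite !mul1r => -> //; move=> s; rewrite !mul1r.
Qed.

Lemma tx1 : tangent_x (Z1 q) t0 ->
  (q bd1 t0).2 - (q bd2 t0).2 = 0 /\ (v bd1 t0).2 - (v bd2 t0).2 = 0.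
Proof.
move=> [p D]; split; first exact: p.
have [_ [a2 _]] := d bd1; have [_ [b2 _]] := d bd2; have [_ [c2 _]] := d bd3.
have := vel_comb (c1 := 1) (c2 := -1) (c3 := 0) t0in a2 b2 c2 _ D.
by move=> ->; [ring | move=> s; rewrite /Z1 /=; ring].
Qed.

Lemma ty1 : tangent_y (Z1 q) t0 ->
  (q bd1 t0).1 - (q bd2 t0).1 = 0 /\ (v bd1 t0).1 - (v bd2 t0).1 = 0.
Proof.
move=> [p D]; split; first exact: p.
have [a2 _] := d bd1; have [b2 _] := d bd2; have [c2 _] := d bd3.
have := vel_comb (c1 := 1) (c2 := -1) (c3 := 0) t0in a2 b2 c2 _ D.
by move=> ->; [ring | move=> s; rewrite /Z1 /=; ring].
Qed.

Lemma tx2 : tangent_x (Z2 q) t0 ->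
  (q bd3 t0).2 - ((q bd1 t0).2 + (q bd2 t0).2) / 2 = 0 /\ (v bd3 t0).2 - ((v bd1 t0).2 + (v bd2 t0).2) / 2 = 0.
Proof.
move=> [p D]; split; first exact: p.
have [_ [a2 _]] := d bd1; have [_ [b2 _]] := d bd2; have [_ [c2 _]] := d bd3.
have := vel_comb (c1 := - 2^-1) (c2 := - 2^-1) (c3 := 1) t0in a2 b2 c2 _ D.
by move=> ->; [ring | move=> s; rewrite /Z2 /=; ring].
Qed.

Lemma ty2 : tangent_y (Z2 q) t0 ->
  (q bd3 t0).1 - ((q bd1 t0).1 + (q bd2 t0).1) / 2 = 0 /\ (v bd3 t0).1 - ((v bd1 t0).1 + (v bd2 t0).1) / 2 = 0.
Proof.
move=> [p D]; split; first exact: p.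
have [a2 _] := d bd1; have [b2 _] := d bd2; have [c2 _] := d bd3.
have := vel_comb (c1 := - 2^-1) (c2 := - 2^-1) (c3 := 1) t0in a2 b2 c2 _ D.
by move=> ->; [ring | move=> s; rewrite /Z2 /=; ring].
Qed.

Hypothesis cf : collision_free q.

Lemma case_xx : tangent_x (Z1 q) t0 -> tangent_x (Z2 q) t0 ->
  forall t : R, 0 < t <= 1 -> (Z1 q t).2 = 0 /\ (Z2 q t).2 = 0.
Proof.
move=> T1 T2.
have [p1 w1] := tx1 T1; have [p2 w2] := tx2 T2; have [_ s2] := chi_facts; have [_ u2] := vchi_facts.
have agree : forall i, q i t0 = refl false 1 (-1) q i t0 /\ v i t0 = refl false 1 (-1) v i t0.
  move=> i; rewrite /refl /pi /=.
  by have [->|[->|->]] := ord3 i; split; apply: pair_fix; rewrite /=; lra.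
move=> t tin; have E := sym_fix sq1 sqN1 Hs cf t0in agree tin.
have := congr1 snd (E bd1); have := congr1 snd (E bd2); have := congr1 snd (E bd3).
rewrite /refl /pi /Z1 /Z2 /= => f3 f2 f1.
split; lra.
Qed.

Lemma case_yy : tangent_y (Z1 q) t0 -> tangent_y (Z2 q) t0 ->
  forall t : R, 0 < t <= 1 -> (Z1 q t).1 = 0 /\ (Z2 q t).1 = 0.
Proof.
move=> T1 T2.
have [p1 w1] := ty1 T1; have [p2 w2] := ty2 T2; have [s2 _] := chi_facts; have [u2 _] := vchi_facts.
have agree : forall i, q i t0 = refl false (-1) 1 q i t0 /\ v i t0 = refl false (-1) 1 v i t0.
  move=> i; rewrite /refl /pi /=.
  by have [->|[->|->]] := ord3 i; split; apply: pair_fix; rewrite /=; lra.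
move=> t tin; have E := sym_fix sqN1 sq1 Hs cf t0in agree tin.
have := congr1 fst (E bd1); have := congr1 fst (E bd2); have := congr1 fst (E bd3).
rewrite /refl /pi /Z1 /Z2 /= => f3 f2 f1.
split; lra.
Qed.

Lemma case_xy : tangent_x (Z1 q) t0 -> tangent_y (Z2 q) t0 ->
  forall t : R, 0 < t <= 1 -> (Z1 q t).2 = 0 /\ (Z2 q t).1 = 0.
Proof.
move=> T1 T2.
have [p1 w1] := tx1 T1; have [p2 w2] := ty2 T2; have [s2 _] := chi_facts; have [u2 _] := vchi_facts.
have agree : forall i, q i t0 = refl true (-1) 1 q i t0 /\ v i t0 = refl true (-1) 1 v i t0.
  move=> i; rewrite /refl /pi.
  by have [->|[->|->]] := ord3 i; rewrite ?pswap1 ?pswap2 ?pswap3; split; apply: pair_fix; rewrite /=; lra.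
move=> t tin; have E := sym_fix sqN1 sq1 Hs cf t0in agree tin.
have := congr1 fst (E bd1); have := congr1 fst (E bd2); have := congr1 fst (E bd3).
have := congr1 snd (E bd1); have := congr1 snd (E bd2).
rewrite /refl /pi /Z1 /Z2 ?pswap1 ?pswap2 ?pswap3 /= => g2 g1 f3 f2 f1.
split; lra.
Qed.

Lemma case_yx : tangent_y (Z1 q) t0 -> tangent_x (Z2 q) t0 ->
  forall t : R, 0 < t <= 1 -> (Z1 q t).1 = 0 /\ (Z2 q t).2 = 0.
Proof.
move=> T1 T2.
have [p1 w1] := ty1 T1; have [p2 w2] := tx2 T2; have [_ s2] := chi_facts; have [_ u2] := vchi_facts.
have agree : forall i, q i t0 = refl true 1 (-1) q i t0 /\ v i t0 = refl true 1 (-1) v i t0.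
  move=> i; rewrite /refl /pi.
  by have [->|[->|->]] := ord3 i; rewrite ?pswap1 ?pswap2 ?pswap3; split; apply: pair_fix; rewrite /=; lra.
move=> t tin; have E := sym_fix sq1 sqN1 Hs cf t0in agree tin.
have := congr1 snd (E bd1); have := congr1 snd (E bd2); have := congr1 snd (E bd3).
have := congr1 fst (E bd1); have := congr1 fst (E bd2).
rewrite /refl /pi /Z1 /Z2 ?pswap1 ?pswap2 ?pswap3 /= => g2 g1 f3 f2 f1.
split; lra.
Qed.
End Core.
End G.

Theorem proposition5p5 (R : realType) (q : 'I_3 -> R -> pt R) (t0 : R) :
  is_minimizer q ->
  collision_free q ->
  newton q ->
  0 < t0 <= 1 ->
  (tangent_x (Z1 q) t0 \/ tangent_y (Z1 q) t0) ->
  (tangent_x (Z2 q) t0 \/ tangent_y (Z2 q) t0) ->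
  stays_on_axes (Z1 q) t0 /\ stays_on_axes (Z2 q) t0.
Proof.
move=> [w [[_ [Hchi _]] _]] cf [v Hs0] t0in H1 H2.
have Hs : sol q v := Hs0.
split; split.
- move=> T1 t tin; case: H2 => T2.
    exact: (case_xx Hs t0in Hchi cf T1 T2 tin).1.
  exact: (case_xy Hs t0in Hchi cf T1 T2 tin).1.
- move=> T1 t tin; case: H2 => T2.
    exact: (case_yx Hs t0in Hchi cf T1 T2 tin).1.
  exact: (case_yy Hs t0in Hchi cf T1 T2 tin).1.
- move=> T2 t tin; case: H1 => T1.
    exact: (case_xx Hs t0in Hchi cf T1 T2 tin).2.
  exact: (case_yx Hs t0in Hchi cf T1 T2 tin).2.
- move=> T2 t tin; case: H1 => T1.
    exact: (case_xy Hs t0in Hchi cf T1 T2 tin).2.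
  exact: (case_yy Hs t0in Hchi cf T1 T2 tin).2.
Qed.
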